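(* Let $M$ be a monoid (associative binary operation $\mu:M\times M\to M$, $\mu(a,b)=a\ast b$, with identity $e$) equipped with a topology. The following are equivalent: (1) $M$ is a pre-$\Delta$-monoid; (2) $\Delta(M)$, with the same operation, is a $\Delta$-monoid; (3) for every $k\geq 2$ the $k$-ary operation $\mu_k:\Delta(M^k)\to M$, $\mu_k(a_1,\dots,a_k)=a_1\ast a_2\ast\cdots\ast a_k$, is continuous; (4) for every $\Delta$-generated space $D$ and all continuous maps $f,g:D\to M$, the pointwise product $f\ast g:D\to M$, $x\mapsto f(x)\ast g(x)$, is continuous.
   Context: $I=[0,1]$. A space $X$ is $\Delta$-generated if $U\subseteq X$ is open iff $\alpha^{-1}(U)$ is open in $I$ for every continuous path $\alpha:I\to X$. For a space $X$, $\Delta(X)$ denotes the same underlying set with the topology consisting of all sets $U$ such that $\alpha^{-1}(U)$ is open in $I$ for every continuous path $\alpha:I\to X$ (this is finer than the original topology and is $\Delta$-generated). A pre-$\Delta$-monoid is a space $M$ with a monoid operation $\ast$ such that for any continuous paths $\alpha,\beta:I\to M$, the pointwise product path $\alpha\ast\beta$, $t\mapsto\alpha(t)\ast\beta(t)$, is continuous. A pre-$\Delta$-monoid whose underlying space is $\Delta$-generated is called a $\Delta$-monoid. $M^k$ carries the product topology. *)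

(* Defs.v *)
From Stdlib Require Import Reals Lra Lia Arith List.
Open Scope R_scope.

Definition is_topology {X : Type} (O : (X -> Prop) -> Prop) : Prop :=
  O (fun _ => True) /\
  (forall U V, O U -> O V -> O (fun x => U x /\ V x)) /\
  (forall F : (X -> Prop) -> Prop,
      (forall U, F U -> O U) -> O (fun x => exists U, F U /\ U x)).

Definition continuous {X Y : Type} (OX : (X -> Prop) -> Prop)
  (OY : (Y -> Prop) -> Prop) (f : X -> Y) : Prop :=
  forall V, OY V -> OX (fun x => V (f x)).

Definition I : Type := { t : R | 0 <= t <= 1 }.

Definition I_open (U : I -> Prop) : Prop :=
  forall t : I, U t -> exists eps, eps > 0 /\
    forall s : I, Rabs (proj1_sig s - proj1_sig t) < eps -> U s.

Definition DeltaT {X : Type} (O : (X -> Prop) -> Prop) (U : X -> Prop) : Prop :=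
  forall alpha : I -> X, continuous I_open O alpha -> I_open (fun t => U (alpha t)).

Definition Delta_generated {X : Type} (O : (X -> Prop) -> Prop) : Prop :=
  forall U, O U <-> DeltaT O U.

Definition is_monoid {M : Type} (op : M -> M -> M) (e : M) : Prop :=
  (forall a b c, op a (op b c) = op (op a b) c) /\
  (forall a, op e a = a) /\ (forall a, op a e = a).

Definition pre_Delta_monoid {M : Type} (O : (M -> Prop) -> Prop) (op : M -> M -> M) : Prop :=
  forall alpha beta : I -> M,
    continuous I_open O alpha -> continuous I_open O beta ->
    continuous I_open O (fun t => op (alpha t) (beta t)).

Definition Delta_monoid {M : Type} (O : (M -> Prop) -> Prop) (op : M -> M -> M) : Prop :=
  Delta_generated O /\ pre_Delta_monoid O op.

Definition fin (k : nat) : Type := { i : nat | (i < k)%nat }.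

Definition prod_open {M : Type} (O : (M -> Prop) -> Prop) (k : nat)
  (U : (fin k -> M) -> Prop) : Prop :=
  forall a, U a -> exists V : fin k -> (M -> Prop),
    (forall i, O (V i)) /\ (forall i, V i (a i)) /\
    (forall b, (forall i, V i (b i)) -> U b).

(* mu_k (a_1,...,a_k) = a_1 * a_2 * ... * a_k  (coordinates indexed 0..k-1). *)
Definition coord {M : Type} (e : M) (k : nat) (a : fin k -> M) (i : nat) : M :=
  match lt_dec i k with
  | left h => a (exist _ i h)
  | right _ => e
  end.

Definition mu_k {M : Type} (op : M -> M -> M) (e : M) (k : nat) (a : fin k -> M) : M :=
  fold_right (fun i acc => op (coord e k a i) acc) e (seq 0 k).

(* Main.v *)
Require Import Defs.
From Stdlib Require Import Reals Lra Lia Arith List.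
Open Scope R_scope.

Lemma fin_eq (k i : nat) (h : (i < k)%nat) (j : fin k) :
  proj1_sig j = i -> j = exist _ i h.
Proof.
  destruct j as [j hj]; simpl; intros ->; f_equal; apply le_unique.
Qed.

Lemma I_open_ext (U U' : I -> Prop) :
  I_open U -> (forall t, U t <-> U' t) -> I_open U'.
Proof.
  intros HU Heq t Ht. apply Heq in Ht. destruct (HU t Ht) as [eps [He Hs]].
  exists eps; split; [exact He|]. intros s Hs'. apply Heq. now apply Hs.
Qed.

Lemma const_cont {M : Type} (O : (M -> Prop) -> Prop) (c : M) :
  continuous I_open O (fun _ => c).
Proof.
  intros V _ t Ht. exists 1; split; [lra|]. intros; exact Ht.
Qed.

Lemma path_equiv {M : Type} (T : (M -> Prop) -> Prop) (alpha : I -> M) :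
  continuous I_open T alpha <-> continuous I_open (DeltaT T) alpha.
Proof.
  split.
  - intros H V HV. exact (HV alpha H).
  - intros H V HV. apply H. intros beta Hb. exact (Hb V HV).
Qed.

Lemma I_topo : is_topology I_open.
Proof.
  split; [|split].
  - intros t _. exists 1; split; [lra|]; auto.
  - intros U V HU HV t [Ut Vt].
    destruct (HU t Ut) as [e1 [He1 H1]]. destruct (HV t Vt) as [e2 [He2 H2]].
    exists (Rmin e1 e2); split; [now apply Rmin_pos|].
    intros s Hs. split; [apply H1 | apply H2];
      eapply Rlt_le_trans; eauto; [apply Rmin_l | apply Rmin_r].
  - intros F HF t [U [FU Ut]].
    destruct (HF U FU t Ut) as [eps [He H]].
    exists eps; split; [exact He|]. intros s Hs. exists U; split; auto.
Qed.

Lemma I_dg : Delta_generated I_open.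
Proof.
  intros U; split.
  - intros HU alpha Ha. exact (Ha U HU).
  - intros H. apply (H (fun t => t)). intros V HV. exact HV.
Qed.

Theorem mainTheorem1 (M : Type) (op : M -> M -> M) (e : M) (T : (M -> Prop) -> Prop)
  (HT : is_topology T) (Hmon : is_monoid op e) :
  let P1 := pre_Delta_monoid T op in
  let P2 := Delta_monoid (DeltaT T) op in
  let P3 := forall k : nat, (2 <= k)%nat ->
              continuous (DeltaT (prod_open T k)) T (mu_k op e k) in
  let P4 := forall (D : Type) (TD : (D -> Prop) -> Prop),
              is_topology TD -> Delta_generated TD ->
              forall f g : D -> M, continuous TD T f -> continuous TD T g ->
              continuous TD T (fun x => op (f x) (g x)) in
  (P1 <-> P2) /\ (P1 <-> P3) /\ (P1 <-> P4).
Proof.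
  intros P1 P2 P3 P4; subst P1 P2 P3 P4.
  destruct HT as [HTfull _].
  destruct Hmon as [_ [_ Hre]].
  split; [|split].
  - split.
    + intros H1. split.
      * intros U; split; intros H alpha Ha; apply H.
        -- apply (proj2 (path_equiv T alpha)); exact Ha.
        -- apply (proj1 (path_equiv T alpha)); exact Ha.
      * intros alpha beta Ha Hb. apply (proj1 (path_equiv T _)).
        apply H1; apply (proj2 (path_equiv T _)); auto.
    + intros [_ H2] alpha beta Ha Hb. apply (proj2 (path_equiv T _)).
      apply H2; apply (proj1 (path_equiv T _)); auto.
  - split.
    + intros H1 k _ V HV alpha Ha.
      assert (Hc : forall i, continuous I_open T (fun t => coord e k (alpha t) i)).
      { intros i. unfold coord. destruct (lt_dec i k) as [h|h].
        - intros W HW. apply (Ha (fun a => W (a (exist _ i h)))).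
          intros a Wa.
          exists (fun j => if Nat.eq_dec (proj1_sig j) i then W else fun _ => True).
          split; [|split].
          + intros j; destruct (Nat.eq_dec (proj1_sig j) i); auto.
          + intros j; destruct (Nat.eq_dec (proj1_sig j) i) as [E|]; auto.
            rewrite (fin_eq k i h j E). exact Wa.
          + intros b Hb. specialize (Hb (exist _ i h)). simpl in Hb.
            destruct (Nat.eq_dec i i); [exact Hb | congruence].
        - apply const_cont. }
      assert (Hf : forall l, continuous I_open T
        (fun t => fold_right (fun i acc => op (coord e k (alpha t) i) acc) e l)).
      { induction l as [|i l IH]; simpl; [apply const_cont|]. apply H1; auto. }
      exact (Hf (seq 0 k) V HV).
    + intros H3 alpha beta Ha Hb V HV.
      set (gamma := fun (t : I) (i : fin 2) =>
                      if Nat.eq_dec (proj1_sig i) 0 then alpha t else beta t).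
      assert (Hg : continuous I_open (prod_open T 2) gamma).
      { intros U HU t Ht. destruct (HU (gamma t) Ht) as [W [HWo [HWin HWsub]]].
        assert (h0 : (0 < 2)%nat) by lia. assert (h1 : (1 < 2)%nat) by lia.
        assert (A0 : W (exist _ 0%nat h0) (alpha t)) by exact (HWin (exist _ 0%nat h0)).
        assert (A1 : W (exist _ 1%nat h1) (beta t)) by exact (HWin (exist _ 1%nat h1)).
        destruct (Ha _ (HWo _) t A0) as [e1 [He1 E1]].
        destruct (Hb _ (HWo _) t A1) as [e2 [He2 E2]].
        exists (Rmin e1 e2); split; [now apply Rmin_pos|].
        intros s Hs. apply HWsub. intros j.
        destruct (Nat.eq_dec (proj1_sig j) 0) as [Ej|Ej].
        - rewrite (fin_eq 2 0 h0 j Ej). apply E1.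
          eapply Rlt_le_trans; eauto; apply Rmin_l.
        - assert (Ej' : proj1_sig j = 1%nat) by (destruct j as [j hj]; simpl in *; lia).
          rewrite (fin_eq 2 1 h1 j Ej'). apply E2.
          eapply Rlt_le_trans; eauto; apply Rmin_r. }
      apply (I_open_ext _ _ (H3 2%nat (le_n 2) V HV gamma Hg)).
      intros t. unfold mu_k. cbn [seq fold_right]. unfold coord.
      destruct (lt_dec 0 2); [|lia]. destruct (lt_dec 1 2); [|lia].
      simpl. rewrite Hre. tauto.
  - split.
    + intros H1 D TD _ HD f g Hf Hg V HV. apply (proj2 (HD _)).
      intros gamma Hgam.
      assert (Cf : continuous I_open T (fun t => f (gamma t))).
      { intros W HW. apply (Hgam (fun x => W (f x))). apply Hf. exact HW. }
      assert (Cg : continuous I_open T (fun t => g (gamma t))).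
      { intros W HW. apply (Hgam (fun x => W (g x))). apply Hg. exact HW. }
      exact (H1 _ _ Cf Cg V HV).
    + intros H4 alpha beta Ha Hb.
      exact (H4 I I_open I_topo I_dg alpha beta Ha Hb).
Qed.
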